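(* For every $k\in\mathbb{N}$, every $v\in V^X$ and every $i\in\Pi$, $\sup\{\mathrm{Cost}_i(\rho)\mid\rho\in\Lambda^k(v)\}=\max\{\mathrm{Cost}_i(\rho)\mid\rho\in\Lambda^k(v)\}$, where the maximum is taken in $\mathbb{N}\cup\{+\infty\}$ (i.e., the supremum is attained).
   Context: Let $\mathcal{G}$ be a quantitative reachability game on an arena $G=(\Pi,V,(V_i)_{i\in\Pi},E)$ (finite player set $\Pi$, finite vertex set $V$ with $|V|\ge2$, $|\Pi|\le|V|$, partition $(V_i)$, every vertex has a successor) with targets $F_i\subseteq V$ and costs $\mathrm{Cost}_i(\rho)=$ least $k$ with $\rho_k\in F_i$ (or $+\infty$); $v_0\in V$. Extended game: arena $X$ with vertices $V^X=V\times2^\Pi$, edges $((v,I),(v',I'))\in E^X$ iff $(v,v')\in E$ and $I'=I\cup\{i:v'\in F_i\}$, $(v,I)\in V^X_i$ iff $v\in V_i$, targets $F^X_i=\{(v,I):i\in I\}$ with corresponding reachability costs $\mathrm{Cost}_i$; $x_0=(v_0,\{i:v_0\in F_i\})$; $I(u)$ is the second component. $\mathcal{I}$ is the set of $I$ with some $(v,I)$ reachable from $x_0$, $N=|\mathcal{I}|$, $J_1<\dots<J_N$ a fixed total order of $\mathcal{I}$ extending $I<I'$ iff $I\ne I'$ and some $(v',I')$ is reachable from some $(v,I)$. $V^{\ge J_n}=\{(v,J_m):v\in V,m\ge n\}$. Labelings: for $\lambda:V^X\to\mathbb{N}\cup\{+\infty\}$, a play $\rho$ of $X$ is $\lambda$-consistent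 if $\mathrm{Cost}_i(\rho_{\ge n})\le\lambda(\rho_n)$ whenever $\rho_n\in V^X_i$. $\lambda^0(u)=0$ if $u\in V^X_i$ and $i\in I(u)$, else $+\infty$. The update of $\lambda^k$ w.r.t. $V^{\ge J_n}$ keeps values outside $V^{\ge J_n}$ and for $u\in V^{\ge J_n}\cap V^X_i$ sets $\lambda^{k+1}(u)=0$ if $i\in I(u)$, otherwise $1+\min_{(u,u')\in E^X}\sup\{\mathrm{Cost}_i(\rho):\rho\in\Lambda^k(u')\}$ ($1+(+\infty)=+\infty$). The sequence is generated by $n_0=N$, $\lambda^{k+1}=$ update of $\lambda^k$ w.r.t. $V^{\ge J_{n_k}}$, $n_{k+1}=n_k-1$ if $\lambda^{k+1}=\lambda^k$ and $n_k>1$, else $n_{k+1}=n_k$. $\Lambda^k(v)$ is the set of $\lambda^k$-consistent plays from $v$. *)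

(* Defs.v *)
From Stdlib Require Import ClassicalEpsilon.
From mathcomp Require Import all_boot.
Set Implicit Arguments. Unset Strict Implicit. Unset Printing Implicit Defensive.

(* N u {+oo}: Some n = n, None = +oo. *)
Definition enat := option nat.

Definition ele (x y : enat) : bool :=
  match y, x with
  | None, _ => true
  | Some _, None => false
  | Some m, Some n => n <= m
  end.

Definition emin (x y : enat) : enat := if ele x y then x else y.

Definition esucc (x : enat) : enat := omap S x.

Definition is_esup (P : enat -> Prop) (s : enat) : Prop :=
  (forall x, P x -> ele x s) /\ (forall b, (forall x, P x -> ele x b) -> ele s b).

(* the supremum (it always exists in N u {+oo}; chosen by epsilon) *)
Definition esup (P : enat -> Prop) : enat := epsilon (inhabits None) (is_esup P).

Section Game.
Variables (Pi V : finType) (owner : V -> Pi) (E : rel V) (F : Pi -> {set V}).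

Definition VX := (V * {set Pi})%type.

Definition EX : rel VX := fun u u' =>
  E u.1 u'.1 && (u'.2 == u.2 :|: [set i | u'.1 \in F i]).

Definition ownerX (u : VX) : Pi := owner u.1.

Definition FX (i : Pi) : {set VX} := [set u : VX | i \in u.2].

Definition x0 (v0 : V) : VX := (v0, [set i | v0 \in F i]).

Definition playX (rho : nat -> VX) : Prop := forall n, EX (rho n) (rho n.+1).

Definition suffix (rho : nat -> VX) (n : nat) : nat -> VX := fun k => rho (n + k).

Definition cost (i : Pi) (rho : nat -> VX) : enat :=
  match excluded_middle_informative (exists k, (fun k => rho k \in FX i) k) with
  | left h => Some (ex_minn h)
  | right _ => None
  end.

Definition consistent (lam : {ffun VX -> enat}) (rho : nat -> VX) : Prop :=
  forall n i, ownerX (rho n) = i -> ele (cost i (suffix rho n)) (lam (rho n)).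

Definition Lam (lam : {ffun VX -> enat}) (u : VX) (rho : nat -> VX) : Prop :=
  playX rho /\ rho 0 = u /\ consistent lam rho.

Definition lam0 : {ffun VX -> enat} :=
  [ffun u => if ownerX u \in u.2 then Some 0 else None].

(* J = [:: J_1; ...; J_N] ; V^{>= J_n} = {(v, J_m) | m >= n} *)
Definition VgeJ (J : seq {set Pi}) (n : nat) (u : VX) : bool := u.2 \in drop n.-1 J.

Definition update (J : seq {set Pi}) (lam : {ffun VX -> enat}) (n : nat)
  : {ffun VX -> enat} :=
  [ffun u => if VgeJ J n u then
               (if ownerX u \in u.2 then Some 0
                else esucc (\big[emin/None]_(u' | EX u u')
                      esup (fun c => exists rho, Lam lam u' rho /\ c = cost (ownerX u) rho)))
             else lam u].

Fixpoint lamseq (J : seq {set Pi}) (k : nat) : {ffun VX -> enat} * nat :=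
  match k with
  | 0 => (lam0, size J)
  | k'.+1 =>
      let: (l, n) := lamseq J k' in
      let l' := update J l n in
      (l', if (l' == l) && (1 < n) then n.-1 else n)
  end.

Definition lamk (J : seq {set Pi}) (k : nat) : {ffun VX -> enat} := (lamseq J k).1.

(* J is a total order J_1 < ... < J_N of the reachable sets I, extending reachability *)
Definition valid_order (v0 : V) (J : seq {set Pi}) : Prop :=
  [/\ uniq J,
      (forall I, I \in J <-> exists v, connect EX (x0 v0) (v, I)) &
      (forall u u', u.2 \in J -> u'.2 \in J -> u.2 != u'.2 -> connect EX u u' ->
                    index u.2 J < index u'.2 J)].

End Game.

(* Main.v *)
Require Import Defs.
From Stdlib Require Import ClassicalEpsilon Classical.
From mathcomp Require Import all_boot.
Set Implicit Arguments. Unset Strict Implicit. Unset Printing Implicit Defensive.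

Definition asb (P : Prop) : bool := if excluded_middle_informative P then true else false.
Lemma asbP (P : Prop) : reflect P (asb P).
Proof. by rewrite /asb; case: excluded_middle_informative => h; constructor. Qed.

Lemma ele_None x : ele x None. Proof. by case: x. Qed.
Lemma ele_refl x : ele x x. Proof. by case: x => //= n. Qed.
Lemma ele_trans x y z : ele x y -> ele y z -> ele x z.
Proof. by case: z => [c|] //; case: y => [b|] //; case: x => [a|] //= ; apply: leq_trans. Qed.
Lemma ele_anti x y : ele x y -> ele y x -> x = y.
Proof.
case: x => [a|]; case: y => [b|] //= h1 h2.
by have -> : a = b by apply/eqP; rewrite eqn_leq h1 h2.
Qed.
Lemma ele_NoneS n : ele None (Some n) = false. Proof. by []. Qed.
Lemma ele_SS a b : ele (Some a) (Some b) = (a <= b). Proof. by []. Qed.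

Lemma esup_exists (P : enat -> Prop) : exists s, is_esup P s.
Proof.
case: (classic (exists m, forall x, P x -> ele x (Some m))) => [hb|hnb].
- have ex : exists n, asb (forall x, P x -> ele x (Some n)).
    by case: hb => m hm; exists m; apply/asbP.
  case: (ex_minnP ex) => n /asbP hn hmin.
  exists (Some n); split => // [[m|]] hub; last by [].
  by rewrite ele_SS; apply: hmin; apply/asbP.
- exists None; split => [x _|]; first exact: ele_None.
  case=> [m|] hub //; exfalso; apply: hnb; by exists m.
Qed.

Lemma esup_spec P : is_esup P (esup P).
Proof.
rewrite /esup; apply: epsilon_spec; exact: esup_exists.
Qed.
Lemma esup_ub P x : P x -> ele x (esup P).
Proof. by case: (esup_spec P) => h _; apply: h. Qed.
Lemma esup_least P b : (forall x, P x -> ele x b) -> ele (esup P) b.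
Proof. by case: (esup_spec P) => _ h; apply: h. Qed.

Definition agree (T : Type) (N : nat) (f g : nat -> T) := forall k, k < N -> f k = g k.

Section Konig.
Variable T : finType.
Variable B : nat -> (nat -> T) -> Prop.
Hypothesis Bdec : forall M M' f, M <= M' -> B M' f -> B M f.
Hypothesis Bne : forall M, exists f, B M f.

Definition goodK (g : nat -> T) N := forall M, exists f, B M f /\ agree N g f.
Definition updK (g : nat -> T) N t := fun k => if k == N then t else g k.

Lemma goodK_step g N : goodK g N -> exists t, goodK (updK g N t) N.+1.
Proof.
move=> hg; apply: NNPP => hno.
have hs : forall s : seq T, exists M, forall t, t \in s -> forall f, B M f -> ~ agree N.+1 (updK g N t) f.
  elim=> [|t s [M hM]]; first by exists 0.
  have : ~ goodK (updK g N t) N.+1 by move=> h; apply: hno; exists t.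
  move/not_all_ex_not => [M' hM'].
  exists (maxn M M') => t' /[!inE] /orP [/eqP ->|ht'] f hf hag.
  + apply: hM'; exists f; split => //; apply: Bdec hf; exact: leq_maxr.
  + apply: (hM t' ht' f) => //; apply: Bdec hf; exact: leq_maxl.
case: (hs (enum T)) => M hM.
case: (hg M) => f [hf hag].
apply: (hM (f N) _ f hf); first by rewrite mem_enum.
move=> k; rewrite ltnS leq_eqVlt /updK => /orP [/eqP ->|hk]; first by rewrite eqxx.
by rewrite (ltn_eqF hk); apply: hag.
Qed.

Lemma konig : exists rho : nat -> T, forall N M, exists f, B M f /\ agree N rho f.
Proof.
case: (Bne 0) => f0 _.
pose nx g N := epsilon (inhabits (f0 0)) (fun t => goodK (updK g N t) N.+1).
pose fix G N := if N is N'.+1 then updK (G N') N' (nx (G N') N') else f0.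
have hG : forall N, goodK (G N) N.
  elim=> [|N IH] /=.
    by move=> M; case: (Bne M) => f hf; exists f; split.
  exact: (epsilon_spec (inhabits (f0 0)) (fun t => goodK (updK (G N) N t) N.+1) (goodK_step IH)).
have hGk : forall N k, k < N -> G N k = G k.+1 k.
  elim=> [|N IH] k //; rewrite ltnS leq_eqVlt => /orP [/eqP ->|hk] //=.
  by rewrite /updK (ltn_eqF hk) IH.
exists (fun n => G n.+1 n) => N M.
case: (hG N M) => f [hf hag]; exists f; split => // k hk.
by rewrite -(hag k hk) (hGk N k hk).
Qed.
End Konig.

Section Cost.
Variables (Pi V : finType).
Implicit Types (rho : nat -> VX Pi V) (i : Pi).

Lemma cost_ge i rho c :
  ele (Some c) (cost i rho) <-> (forall k, k < c -> rho k \notin FX V i).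
Proof.
rewrite /cost; case: excluded_middle_informative => [h|h].
- case: ex_minnP => m hm hmin; rewrite ele_SS; split.
  + move=> hcm k hk; apply/negP => hk'.
    have := hmin k hk'; rewrite leqNgt => /negP; apply; exact: leq_trans hk hcm.
  + move=> hall; rewrite leqNgt; apply/negP => hmc.
    by move: (hall m hmc); rewrite hm.
- split=> // _ k _; apply/negP => hk; apply: h; by exists k.
Qed.

Lemma cost_le i rho n : rho n \in FX V i -> ele (cost i rho) (Some n).
Proof.
rewrite /cost; case: excluded_middle_informative => [h|h] hn.
- case: ex_minnP => m hm hmin; exact: hmin.
- by exfalso; apply: h; exists n.
Qed.

Lemma cost_some i rho n : cost i rho = Some n -> rho n \in FX V i.
Proof.
rewrite /cost; case: excluded_middle_informative => [h|h] //.
by case: ex_minnP => m hm _ [<-].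
Qed.

Lemma cost_agree i rho rho' c : agree c rho rho' ->
  ele (Some c) (cost i rho) -> ele (Some c) (cost i rho').
Proof.
move=> hag /cost_ge h; apply/cost_ge => k hk; rewrite -hag //; exact: h.
Qed.
End Cost.

Section Game2.
Variables (Pi V : finType) (owner : V -> Pi) (E : rel V) (F : Pi -> {set V}).
Hypothesis hsucc : forall v, exists v', E v v'.
Local Notation VX := (VX Pi V).
Local Notation EX := (EX E F).
Local Notation own := (ownerX owner).

Lemma succX (u : VX) : exists u', EX u u'.
Proof.
case: (hsucc u.1) => v' hv; exists (v', u.2 :|: [set i | v' \in F i]).
by rewrite /EX /= hv eqxx.
Qed.

Lemma min_succ (g : VX -> enat) u :
  exists u', EX u u' /\ forall u'', EX u u'' -> ele (g u') (g u'').
Proof.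
case: (classic (exists n u', EX u u' /\ g u' = Some n)) => [hex|hno].
- have ex : exists n, asb (exists u', EX u u' /\ g u' = Some n).
    by case: hex => n hn; exists n; apply/asbP.
  case: (ex_minnP ex) => n /asbP [u' [hu' hg]] hmin.
  exists u'; split => // u'' hu''; rewrite hg.
  case hg'': (g u'') => [m|] //; rewrite ele_SS; apply: hmin; apply/asbP.
  by exists u''.
- case: (succX u) => u' hu'; exists u'; split => // u'' hu''.
  have -> : g u' = None.
    case hg: (g u') => [n|] //; exfalso; apply: hno; exists n, u'; by [].
  have -> : g u'' = None.
    case hg: (g u'') => [n|] //; exfalso; apply: hno; exists n, u''; by [].
  by [].
Qed.

Definition ch (f : VX -> nat -> VX) (u : VX) : VX :=
  epsilon (inhabits u) (fun u' => EX u u' /\ forall u'', EX u u'' ->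
     ele (cost (own u) (f u')) (cost (own u) (f u''))).

Lemma ch_spec f u : EX u (ch f u) /\ forall u'', EX u u'' ->
     ele (cost (own u) (f (ch f u))) (cost (own u) (f u'')).
Proof.
rewrite /ch; apply: (epsilon_spec (inhabits u) (fun u' => EX u u' /\ forall u'', EX u u'' ->
     ele (cost (own u) (f u')) (cost (own u) (f u'')))).
exact: (min_succ (fun u' => cost (own u) (f u')) u).
Qed.

Fixpoint out (r : nat) : VX -> nat -> VX :=
  match r with
  | 0 => fun u _ => u
  | r'.+1 => fun u n => match n with 0 => u | n'.+1 => out r' (ch (out r') u) n' end
  end.

Lemma out0 r u : out r u 0 = u. Proof. by case: r. Qed.

Lemma out_edge r u n : n < r -> EX (out r u n) (out r u n.+1).
Proof.
elim: r u n => [|r IH] u [|n] //= hn.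
- by rewrite out0; case: (ch_spec (out r) u).
- exact: IH.
Qed.

Lemma out_oneshot r u u' c : EX u u' ->
  ele (Some c.+1) (cost (own u) (out r.+1 u)) -> ele (Some c) (cost (own u) (out r u')).
Proof.
move=> hu' /cost_ge h.
case: (ch_spec (out r) u) => _ hmin.
apply: ele_trans (hmin u' hu').
apply/cost_ge => k hk; exact: (h k.+1 hk).
Qed.

Definition PP (u : VX) (rho : nat -> VX) :=
  forall N M, exists r, M <= r /\ agree N rho (out r u).

Lemma PP_ext u rho rho' : PP u rho -> (forall k, rho k = rho' k) -> PP u rho'.
Proof.
move=> h he N M; case: (h N M) => r [hr hag]; exists r; split => // k hk.
by rewrite -he hag.
Qed.

Lemma PP_ne u : exists rho, PP u rho.
Proof.
have := @konig VX (fun M f => exists r, M <= r /\ f = out r u).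
case.
- move=> M M' f hM [r [hr ->]]; exists r; split => //; exact: leq_trans hM hr.
- by move=> M; exists (out M u), M.
move=> rho hrho; exists rho => N M.
case: (hrho N M) => f [[r [hr ->]] hag]; by exists r.
Qed.

Lemma PP_start u rho : PP u rho -> rho 0 = u.
Proof. by move=> h; case: (h 1 0) => r [_ hag]; rewrite hag // out0. Qed.

Lemma PP_play u rho : PP u rho -> playX E F rho.
Proof.
move=> h n; case: (h n.+2 n.+1) => r [hr hag].
rewrite !hag //; exact: out_edge hr.
Qed.

Lemma PP_tail u rho : PP u rho -> PP (rho 1) (fun n => rho n.+1).
Proof.
move=> h N M; case: (h N.+2 M.+1) => [[|r] [//= hr hag]].
have h1 : rho 1 = ch (out r) u.
  rewrite hag //; exact: out0.
rewrite h1; exists r; split => // k hk; rewrite hag //; exact: ltnW (hk : k.+1 < N.+1).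
Qed.

Lemma PP_suffix u rho n : PP u rho -> PP (rho n) (Defs.suffix rho n).
Proof.
move=> h; elim: n => [|n IH].
- rewrite (PP_start h). apply: (PP_ext h) => k; by rewrite /Defs.suffix.
- have := PP_tail IH; rewrite /Defs.suffix => h'.
  have e : n.+1 = n + 1 by rewrite addn1.
  rewrite {1}e; apply: (PP_ext h') => k; by rewrite addSnnS.
Qed.

Lemma PP_oneshot u rho u' c : PP u rho -> EX u u' ->
  ele (Some c.+1) (cost (own u) rho) ->
  exists pi, PP u' pi /\ ele (Some c) (cost (own u) pi).
Proof.
move=> hP hu' hc.
have := @konig VX (fun M f => exists r, [/\ M <= r, f = out r u' &
            ele (Some c) (cost (own u) (out r u'))]).
case.
- move=> M M' f hM [r [hr -> hcr]]; exists r; split => //; exact: leq_trans hM hr.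
- move=> M; case: (hP c.+1 M.+1) => [[|r] [//= hr hag]].
  exists (out r u'), r; split => //.
  apply: out_oneshot hu' _; exact: cost_agree hag hc.
move=> pi hpi; exists pi; split.
- move=> N M; case: (hpi N M) => f [[r [hr -> _]] hag]; by exists r.
- case: (hpi c 0) => f [[r [_ -> hcr]] hag].
  apply: cost_agree hcr => k hk; by rewrite hag.
Qed.

Definition Good (lam : {ffun VX -> enat}) :=
  forall u rho, PP u rho -> ele (cost (own u) rho) (lam u).

Lemma Good_Lam lam u rho : Good lam -> PP u rho -> Lam owner E F lam u rho.
Proof.
move=> hG hP; split; first exact: PP_play hP.
split; first exact: PP_start hP.
move=> n i hi; have := hG _ _ (PP_suffix n hP); by rewrite hi.
Qed.

Lemma own_in u rho : PP u rho -> own u \in u.2 -> ele (cost (own u) rho) (Some 0).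
Proof.
move=> hP hin; apply: cost_le; by rewrite (PP_start hP) /FX inE.
Qed.

Lemma Good_lam0 : Good (lam0 owner).
Proof.
move=> u rho hP; rewrite ffunE; case: ifP => h; last exact: ele_None.
exact: own_in.
Qed.

Lemma Good_update J lam n : Good lam -> Good (update owner E F J lam n).
Proof.
move=> hG u rho hP; rewrite ffunE; case: ifP => _; last exact: hG.
case: ifP => hin; first exact: own_in.
apply: (big_ind (fun y => ele (cost (own u) rho) (esucc y))).
- exact: ele_None.
- move=> x y hx hy; rewrite /emin; by case: ifP.
move=> u' hu'.
set S := (fun c => _).
have key : forall c, ele (Some c.+1) (cost (own u) rho) -> ele (Some c) (esup S).
  move=> c hc; case: (PP_oneshot hP hu' hc) => pi [hpi hcpi].
  apply: ele_trans hcpi _; apply: esup_ub; exists pi; split => //.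
  exact: Good_Lam.
case hc: (cost (own u) rho) => [[|c]|].
- by case: (esup S).
- have := key c; rewrite hc => /(_ (leqnn _)).
  by case: (esup S).
- case hs: (esup S) => [m|] //.
  have := key m.+1; rewrite hc hs => /(_ isT); by rewrite ele_SS ltnn.
Qed.

Lemma Good_lamk J k : Good (lamk owner E F J k).
Proof.
elim: k => [|k IH]; first exact: Good_lam0.
rewrite /lamk /=; move: IH; rewrite /lamk.
case: (lamseq owner E F J k) => l n /= IH; exact: Good_update.
Qed.

End Game2.

Lemma sup_attained (Pi V : finType) (owner : V -> Pi) (E : rel V)
  (F : Pi -> {set V}) (lam : {ffun VX Pi V -> enat}) (v : VX Pi V) (i : Pi) :
  (exists rho, Lam owner E F lam v rho) ->
  exists rho, Lam owner E F lam v rho /\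
      cost i rho = esup (fun c => exists rho', Lam owner E F lam v rho' /\ c = cost i rho').
Proof.
move=> [rho0 hrho0].
pose S := (fun c => exists rho', Lam owner E F lam v rho' /\ c = cost i rho').
rewrite -/S.
case: (classic (exists m, forall rho, Lam owner E F lam v rho -> ele (cost i rho) (Some m))) => [[m hm]|hnb].
- have ex : exists n, asb (exists rho, Lam owner E F lam v rho /\ cost i rho = Some n).
    have := hm _ hrho0; case hc: (cost i rho0) => [n|] // _.
    by exists n; apply/asbP; exists rho0.
  have ub : forall n, asb (exists rho, Lam owner E F lam v rho /\ cost i rho = Some n) -> n <= m.
    by move=> n /asbP [rho [hr hc]]; have := hm _ hr; rewrite hc.
  case: (ex_maxnP ex ub) => n /asbP [rho [hr hc]] hmax.
  exists rho; split => //; rewrite hc; apply: ele_anti.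
  + apply: esup_ub; exists rho; by rewrite hc.
  + apply: esup_least => x [rho' [hr' ->]].
    have := hm _ hr'; case hc': (cost i rho') => [n'|] // _.
    rewrite ele_SS; apply: hmax; apply/asbP; by exists rho'.
- have := @konig (VX Pi V) (fun M f => Lam owner E F lam v f /\ ele (Some M) (cost i f)).
  case.
  + move=> M M' f hM [hf hc]; split => //; apply: ele_trans hc; by rewrite ele_SS.
  + move=> M; apply: NNPP => hno; apply: hnb; exists M => rho hr.
    case hc: (cost i rho) => [n|]; last first.
      by exfalso; apply: hno; exists rho; split => //; rewrite hc.
    rewrite ele_SS leqNgt; apply/negP => hlt; apply: hno; exists rho; split => //.
    by rewrite hc ele_SS ltnW.
  move=> rs hrs.
  have hcost : cost i rs = None.
    have h : forall c, ele (Some c) (cost i rs).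
      move=> c; case: (hrs c c) => f [[_ hf] hag].
      apply: cost_agree hf => k hk; by rewrite hag.
    case hc: (cost i rs) => [n|] //; have := h n.+1; by rewrite hc ele_SS ltnn.
  have hL : Lam owner E F lam v rs.
    split; [|split].
    * move=> n; case: (hrs n.+2 0) => f [[[hpl _] _] hag].
      rewrite !hag //; exact: hpl.
    * case: (hrs 1 0) => f [[[_ [h0 _]] _] hag]; by rewrite hag.
    * move=> n j hj; case hl: (lam (rs n)) => [m|]; last exact: ele_None.
      case: (hrs (n + m).+1 0) => f [[[_ [_ hcons]] _] hag].
      have hfn : f n = rs n by rewrite hag // ltnS leq_addr.
      have := hcons n j; rewrite hfn hl => /(_ hj).
      case hcf: (cost j (Defs.suffix f n)) => [p|] // hpm.
      have := cost_some hcf; rewrite /Defs.suffix -hag; last first.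
        by rewrite ltnS leq_add2l.
      move=> hin.
      have := @cost_le _ _ j (Defs.suffix rs n) p hin.
      move=> h; apply: ele_trans h _; exact: hpm.
  exists rs; split => //; rewrite hcost.
  have hs : ele None (esup S) by apply: esup_ub; exists rs; rewrite hcost.
  by move: hs; case: (esup S).
Qed.

Theorem corollary2p12 (Pi V : finType) (owner : V -> Pi) (E : rel V)
  (F : Pi -> {set V}) (v0 : V) (J : seq {set Pi})
  (hV : 2 <= #|V|) (hPi : #|Pi| <= #|V|)
  (hsucc : forall v, exists v', E v v')
  (hJ : valid_order E F v0 J) :
  forall (k : nat) (v : VX Pi V) (i : Pi),
    exists rho, Lam owner E F (lamk owner E F J k) v rho /\
      cost i rho = esup (fun c => exists rho',
                            Lam owner E F (lamk owner E F J k) v rho' /\ c = cost i rho').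
Proof.
move=> k v i; apply: sup_attained.
case: (@PP_ne _ _ owner E F v) => rho hP.
exists rho; apply: (Good_Lam hsucc) => //; exact: (Good_lamk hsucc).
Qed.
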